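(* Let $X$ be a random vector with values in $\mathcal{X}\subset\mathbb{R}^d$ whose distribution has a density $f$ with respect to Lebesgue measure $Leb$. Assume that $f$ is bounded ($\|f\|_\infty<\infty$) and that $\mathbb{P}\{f(X)=c\}=0$ for all $c\ge 0$. Define, for $t>0$, $$\textsc{EM}^*(t)=\max_{\Omega\ \text{Borel}}\big\{\mathbb{P}(X\in\Omega)-t\,Leb(\Omega)\big\},\qquad \lambda(t)=Leb(\{x\in\mathcal{X}: f(x)\ge t\}).$$ Then $\textsc{EM}^*$ is differentiable on $(0,\infty)$ with $\textsc{EM}^{*\prime}(t)=-\lambda(t)$ for all $t>0$. Moreover, since $t\mapsto\lambda(t)$ is decreasing, $\textsc{EM}^*$ is convex.
   Context: $Leb$ denotes Lebesgue measure on $\mathbb{R}^d$. *)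

(* Defs.v *)
From HB Require Import structures.
From mathcomp Require Import all_boot all_order all_algebra.
From mathcomp Require Import all_classical all_reals all_analysis.

Set Implicit Arguments.
Unset Strict Implicit.
Unset Printing Implicit Defensive.

Import Order.TTheory GRing.Theory Num.Theory.
Local Open Scope classical_set_scope.
Local Open Scope ring_scope.

(* R^d is represented by d.-tuple R, equipped (by the library) with the
   product sigma-algebra generated by the coordinate maps, which is the
   Borel sigma-algebra of R^d. *)

Definition box (R : realType) (d : nat) (a b : d.-tuple R) : set (d.-tuple R) :=
  [set x | forall i : 'I_d, tnth a i < tnth x i <= tnth b i].

(* mu is Lebesgue measure on the Borel sets of R^d: it gives every box its
   volume.  (This determines mu uniquely on Borel sets.) *)
Definition is_lebesgue_measure (R : realType) (d : nat)
    (mu : set (d.-tuple R) -> \bar R) : Prop :=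
  forall a b : d.-tuple R, (forall i : 'I_d, tnth a i <= tnth b i) ->
    mu (box a b) = (\prod_(i < d) (tnth b i - tnth a i))%:E.

Definition EMstar (R : realType) (dT : measure_display) (T : measurableType dT)
    (d : nat) (P : probability T R) (X : T -> d.-tuple R)
    (leb : set (d.-tuple R) -> \bar R) (t : R) : R :=
  fine (ereal_sup [set (P (X @^-1` O) - t%:E * leb O)%E
                   | O in [set O : set (d.-tuple R) | measurable O]]).

Definition mv_lambda (R : realType) (d : nat)
    (leb : set (d.-tuple R) -> \bar R) (Xs : set (d.-tuple R))
    (f : d.-tuple R -> R) (t : R) : \bar R :=
  leb [set x | Xs x /\ t <= f x].

(* Main.v *)
Require Import Defs.
From HB Require Import structures.
From mathcomp Require Import all_boot all_order all_algebra.
From mathcomp Require Import all_classical all_reals all_analysis.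
From mathcomp Require Import ring lra.
Import Order.TTheory GRing.Theory Num.Theory.
Local Open Scope classical_set_scope.
Local Open Scope ring_scope.
Lemma mOm_lem (R : realType) (d : nat) (f : d.-tuple R -> R)
  (mf : measurable_fun setT f) (Xs : set (d.-tuple R)) (mXs : measurable Xs) (s : R) :
  measurable [set x | Xs x /\ s <= f x].
Proof.
have := mf measurableT _ (measurable_itv `[s, +oo[). rewrite setTI => h.
have -> : [set x | Xs x /\ s <= f x] = Xs `&` f @^-1` [set` `[s, +oo[].
  by apply/seteqP; split => x /=; rewrite in_itv /= andbT.
exact: measurableI.
Qed.

Lemma mLev_lem (R : realType) (d : nat) (f : d.-tuple R -> R)
  (mf : measurable_fun setT f) (s : R) :
  measurable [set x | f x = s].
Proof.
have := mf measurableT _ (measurable_set1 s). by rewrite setTI.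
Qed.

Lemma fine_measureU (d : measure_display) (T : measurableType d) (R : realType)
  (mu : {measure set T -> \bar R}) (A B : set T) :
  measurable A -> measurable B -> A `&` B = set0 ->
  mu A \is a fin_num -> mu B \is a fin_num ->
  fine (mu (A `|` B)) = fine (mu A) + fine (mu B).
Proof. by move=> mA mB AB fA fB; rewrite measureU // fineD. Qed.

Lemma disjID (U : Type) (A B : set U) : (A `&` B) `&` (A `\` B) = set0.
Proof. by apply/seteqP; split => x //= [[_ h] [_ h']]. Qed.

Lemma inv_anti (R : realType) (n m : nat) : (n <= m)%N -> (m.+1%:R : R)^-1 <= n.+1%:R^-1.
Proof.
move=> nm; rewrite ler_pV2 ?inE ?unitfE ?ltr0Sn ?pnatr_eq0 ?andbT ?ler_nat ?ltnS //.
Qed.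
Lemma inv_pos (R : realType) (n : nat) : 0 < (n.+1%:R : R)^-1.
Proof. by rewrite invr_gt0 ltr0Sn. Qed.
Lemma inv_le1 (R : realType) (n : nat) : (n.+1%:R : R)^-1 <= 1.
Proof. by rewrite invf_le1 ?ltr0Sn // ler1n. Qed.
Lemma arch (R : realType) (e : R) : 0 < e -> exists n : nat, (n.+1%:R : R)^-1 < e.
Proof.
move=> e0; have [N _ HN] := near_infty_natSinv_lt (PosNum e0).
by exists N; exact: (HN N (leqnn N)).
Qed.

Lemma ecvg_near (R : realType) (u : nat -> \bar R) (a e : R) : 0 < e ->
  u n @[n --> \oo] --> a%:E ->
  exists N, ((a - e)%:E < u N)%E /\ (u N < (a + e)%:E)%E.
Proof.
move=> e0 cv.
have hn : nbhs a%:E [set y : \bar R | ((a - e)%:E < y)%E /\ (y < (a + e)%:E)%E].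
  apply/nbhs_EFin; exists e => //= y /=; rewrite !lte_fin => h.
  move: h; rewrite distrC ltr_distl; case/andP => h1 h2; split; lra.
have [N _ HN] := cv _ hn.
by exists N; apply: (HN N (leqnn N)).
Qed.

Theorem proposition1 (R : realType) (d : nat)
  (dT : measure_display) (T : measurableType dT) (P : probability T R)
  (leb : {measure set (d.-tuple R) -> \bar R})
  (Hleb : is_lebesgue_measure leb)
  (Xs : set (d.-tuple R)) (mXs : measurable Xs)
  (X : T -> d.-tuple R) (mX : measurable_fun setT X)
  (XinXs : forall w, Xs (X w))
  (f : d.-tuple R -> R) (mf : measurable_fun setT f)
  (f_ge0 : forall x, 0 <= f x)
  (f_density : forall A : set (d.-tuple R), measurable A ->
     P (X @^-1` A) = (\int[leb]_(x in A) (f x)%:E)%E)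
  (f_bounded : exists M : R, forall x, f x <= M)
  (f_level_null : forall c : R, 0 <= c -> P (X @^-1` [set x | f x = c]) = 0%E) :
  (forall t : R, 0 < t ->
     exists l : R, mv_lambda leb Xs f t = l%:E /\
       is_derive t 1 (EMstar P X leb) (- l)) /\
  (forall s t a : R, 0 < s -> 0 < t -> 0 <= a <= 1 ->
     EMstar P X leb (a * s + (1 - a) * t)
       <= a * EMstar P X leb s + (1 - a) * EMstar P X leb t).
Proof.
pose Om (s : R) := [set x | Xs x /\ s <= f x].
have mOm : forall s, measurable (Om s) by move=> s; exact: mOm_lem.
have mpre : forall A, measurable A -> measurable (X @^-1` A).
  by move=> A mA; rewrite -[X @^-1` A]setTI; exact: mX.
have Pfin : forall A, measurable A -> P (X @^-1` A) \is a fin_num.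
  by move=> A mA; apply: fin_num_measure; exact: mpre.
pose p A := fine (P (X @^-1` A)).
pose l A := fine (leb A).
have PE : forall A, measurable A -> P (X @^-1` A) = (p A)%:E.
  by move=> A mA; rewrite fineK // Pfin.
have lE : forall A, (leb A < +oo)%E -> leb A = (l A)%:E.
  by move=> A hA; rewrite fineK // ge0_fin_numE.
have preXs : forall A, X @^-1` A = X @^-1` (A `&` Xs).
  by move=> A; apply/seteqP; split => w /=; [move=> ?; split|case].
have le_int : forall A s, measurable A -> 0 <= s -> (forall x, A x -> f x <= s) ->
    (P (X @^-1` A) <= s%:E * leb A)%E.
  move=> A s mA s0 hA; rewrite f_density // -integral_cst //.
  apply: ge0_le_integral => //; try (by move=> x _; rewrite lee_fin);
    try (by move=> x Ax; rewrite lee_fin hA);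
    by apply/measurable_realfun.measurable_EFinP; exact: measurable_funS mf.
have ge_int : forall A s, measurable A -> 0 <= s -> (forall x, A x -> s <= f x) ->
    (s%:E * leb A <= P (X @^-1` A))%E.
  move=> A s mA s0 hA; rewrite f_density // -integral_cst //.
  apply: ge0_le_integral => //; try (by move=> x _; rewrite lee_fin);
    try (by move=> x Ax; rewrite lee_fin hA);
    by apply/measurable_realfun.measurable_EFinP; exact: measurable_funS mf.
have finsub : forall E F, measurable E -> measurable F -> E `<=` F ->
    (leb F < +oo)%E -> (leb E < +oo)%E.
  move=> E F mE mF EF hF; apply: le_lt_trans hF.
  by apply: le_measure; rewrite ?inE.
have lebfin : forall s, 0 < s -> (leb (Om s) < +oo)%E.
  move=> s s0.
  have h := ge_int (Om s) s (mOm s) (ltW s0) (fun x (h : Om s x) => proj2 h).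
  have h1 := probability_le1 P (mpre _ (mOm s)).
  rewrite ltey; apply/eqP => E; move: h; rewrite E mulry gtr0_sg // mul1e => h.
  by have := le_trans h h1; rewrite leye_eq.
have Opt : forall s O, 0 < s -> measurable O -> (leb O < +oo)%E ->
    p O - s * l O <= p (Om s) - s * l (Om s).
  move=> s O s0 mO fO.
  pose O' := O `&` Xs.
  have mO' : measurable O' by exact: measurableI.
  have pO : p O = p O' by rewrite /p /O' -preXs.
  have fO' : (leb O' < +oo)%E by apply: finsub fO => //; exact: subIsetl.
  have lO'le : l O' <= l O.
    rewrite /l fine_le // ?ge0_fin_numE //.
    by apply: le_measure; rewrite ?inE //; exact: subIsetl.
  pose A := O' `&` Om s. pose B := O' `\` Om s. pose C := Om s `\` O'.
  have mA : measurable A by exact: measurableI.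
  have mB : measurable B by exact: measurableD.
  have mC : measurable C by exact: measurableD.
  have fA : (leb A < +oo)%E by apply: finsub fO' => //; exact: subIsetl.
  have fB : (leb B < +oo)%E by apply: finsub fO' => //; exact: subDsetl.
  have fC : (leb C < +oo)%E by apply: (finsub _ _ _ (mOm s)) (lebfin s s0) => //;
    exact: subDsetl.
  have lO'eq : l O' = l A + l B.
    rewrite /l -[in LHS](setUIDK O' (Om s)); apply: fine_measureU => //.
    - exact: disjID.
    - by rewrite ge0_fin_numE.
    - by rewrite ge0_fin_numE.
  have pO'eq : p O' = p A + p B.
    rewrite /p -[in LHS](setUIDK O' (Om s)) preimage_setU.
    apply: fine_measureU; try exact: mpre; try exact: Pfin.
    by rewrite -preimage_setI disjID preimage_set0.
  have lOmeq : l (Om s) = l A + l C.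
    rewrite /l /A setIC -[in LHS](setUIDK (Om s) O'); apply: fine_measureU => //.
    - exact: measurableI.
    - exact: disjID.
    - by rewrite ge0_fin_numE // -setIC.
    - by rewrite ge0_fin_numE.
  have pOmeq : p (Om s) = p A + p C.
    rewrite /p /A setIC -[in LHS](setUIDK (Om s) O') preimage_setU.
    apply: fine_measureU; try (apply: mpre => //; exact: measurableI);
      try (apply: Pfin => //; exact: measurableI).
    by rewrite -preimage_setI disjID preimage_set0.
  have hB : p B <= s * l B.
    have := le_int B s mB (ltW s0).
    rewrite PE // lE // -EFinM lee_fin; apply.
    move=> x [[_ Xx] nO]; rewrite leNgt; apply/negP => h; apply: nO; split => //.
    exact: ltW.
  have hC : s * l C <= p C.
    have := ge_int C s mC (ltW s0).
    rewrite PE // lE // -EFinM lee_fin; apply.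
    by move=> x [[_ h] _].
  have hs : s * l O' <= s * l O by rewrite ler_pM2l.
  rewrite pO pOmeq lOmeq; rewrite pO'eq lO'eq in hs *.
  nra.
have EMs : forall s, 0 < s -> EMstar P X leb s = p (Om s) - s * l (Om s).
  move=> s s0; rewrite /EMstar.
  rewrite (_ : ereal_sup _ = (p (Om s) - s * l (Om s))%:E) //.
  apply/eqP; rewrite eq_le; apply/andP; split.
  - apply: ge_ereal_sup => _ [Q mO <-].
    have [hO|hO] := ltP (leb Q) +oo%E.
      rewrite PE // lE // -EFinM -EFinB lee_fin; exact: Opt.
    have -> : leb Q = +oo%E by apply/eqP; rewrite eq_le leey hO.
    by rewrite mulry gtr0_sg // mul1e PE // /= leNye.
  - apply: ereal_sup_ubound; exists (Om s); first exact: mOm.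
    by rewrite PE // lE ?lebfin.
have Sub : forall s t, 0 < s -> 0 < t ->
    EMstar P X leb t - (s - t) * l (Om t) <= EMstar P X leb s.
  move=> s t s0 t0; rewrite !EMs //.
  have := Opt s (Om t) s0 (mOm t) (lebfin t t0).
  lra.
pose L s := l (Om s).
have Mono : forall s s', 0 < s -> s <= s' -> L s' <= L s.
  move=> s s' s0 ss'; rewrite /L /l fine_le ?ge0_fin_numE ?lebfin //;
    try exact: (lt_le_trans s0).
  apply: le_measure; rewrite ?inE //.
  by move=> x [Xx h]; split => //; exact: le_trans h.
have Rc : forall t, 0 < t -> forall e, 0 < e ->
    exists N : nat, L t - e <= L (t + N.+1%:R^-1).
  move=> t t0 e e0.
  pose F n := Om (t + n.+1%:R^-1).
  have tpos : forall n : nat, 0 < t + n.+1%:R^-1.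
    by move=> n; apply: ltr_wpDr => //; exact: ltW (inv_pos R n).
  pose E := Xs `&` [set x | f x = t].
  have mE : measurable E by apply: measurableI => //; exact: mLev_lem.
  have mOE : measurable (Om t `&` E) by exact: measurableI.
  have lE0 : leb (Om t `&` E) = 0%E.
    apply/eqP; rewrite eq_le measure_ge0 andbT.
    have h := ge_int (Om t `&` E) t mOE (ltW t0)
      (fun x (h : (Om t `&` E) x) => proj2 (proj1 h)).
    have h2 : (P (X @^-1` (Om t `&` E)) <= 0)%E.
      rewrite -(f_level_null t (ltW t0)); apply: le_measure; rewrite ?inE.
      - exact: mpre.
      - by apply: mpre; exact: mLev_lem.
      - by move=> w [_ [_ h']].
    have := le_trans h h2.
    have fOE : (leb (Om t `&` E) < +oo)%E.
      by apply: (finsub _ _ mOE (mOm t)) (lebfin t t0); exact: subIsetl.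
    rewrite lE // -EFinM !lee_fin pmulr_rle0 //.
  have Ucup : \bigcup_n F n = Om t `\` E.
    apply/seteqP; split => x.
    - move=> [n _ [Xx h]]; have hp := inv_pos R n; split.
        by split => //; set i := ((n.+1)%:R : R)^-1 in hp h *; lra.
      by move=> [_ fe]; move: h; rewrite fe; set i := ((n.+1)%:R : R)^-1 in hp *; lra.
    - move=> [[Xx tf] nE].
      have tf' : t < f x.
        rewrite lt_neqAle tf andbT; apply/negP => /eqP h; apply: nE; split => //.
      have [n hn] : exists n : nat, ((n.+1)%:R : R)^-1 < f x - t.
        by apply: arch; rewrite subr_gt0.
      exists n => //; split => //; set i := ((n.+1)%:R : R)^-1 in hn *; lra.
  have mU : measurable (\bigcup_n F n) by rewrite Ucup; apply: measurableD.
  have ndF : {homo F : n m / (n <= m)%N >-> (n <= m)%O}.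
    move=> n m nm; rewrite subsetEset => x [Xx h]; split => //.
    by apply: le_trans h; rewrite lerD2l; exact: inv_anti.
  have lOm : leb (Om t) = leb (Om t `\` E).
    rewrite -[in LHS](setUIDK (Om t) E) measureU ?lE0 ?add0e //;
      try exact: measurableD; [by rewrite -[RHS]add0e; congr (_ + _)%E; exact: lE0|exact: disjID].
  have lU : leb (\bigcup_n F n) = (L t)%:E by rewrite Ucup -lOm; exact: lE (lebfin t t0).
  have cv : (leb \o F) n @[n --> \oo] --> (L t)%:E.
    by rewrite -lU; exact: (nondecreasing_cvg_mu (fun n => mOm _) mU ndF).
  have [N [h1 _]] := ecvg_near _ _ _ _ e0 cv.
  exists N; move: h1; rewrite /= /L (lE _ (lebfin _ (tpos N))) lte_fin /F.
  exact: ltW.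
have Lc : forall t, 0 < t -> forall e, 0 < e ->
    exists N : nat, L (t - t / 2 * N.+1%:R^-1) <= L t + e.
  move=> t t0 e e0.
  pose G n := Om (t - t / 2 * n.+1%:R^-1).
  have Gpos : forall n, 0 < t - t / 2 * n.+1%:R^-1.
    move=> n; have := inv_le1 R n; have := inv_pos R n.
    set i := ((n.+1)%:R : R)^-1; nra.
  have Icap : \bigcap_n G n = Om t.
    apply/seteqP; split => x.
    - move=> hx; have [Xx _] := hx 0%N I; split => //.
      rewrite leNgt; apply/negP => hlt.
      have [n hn] : exists n : nat, ((n.+1)%:R : R)^-1 < (t - f x) / (t / 2).
        by apply: arch; apply: divr_gt0; lra.
      have [_ h] := hx n I.
      rewrite ltr_pdivlMr in hn; last by lra.
      set i := ((n.+1)%:R : R)^-1 in hn h; nra.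
    - move=> [Xx h] n _; split => //; have := inv_pos R n.
      set i := ((n.+1)%:R : R)^-1; nra.
  have mI : measurable (\bigcap_n G n) by rewrite Icap.
  have niG : {homo G : n m / (n <= m)%N >-> (m <= n)%O}.
    move=> n m nm; rewrite subsetEset => x [Xx h]; split => //.
    apply: le_trans h; have := inv_anti R n m nm.
    set i := ((n.+1)%:R : R)^-1; set j := ((m.+1)%:R : R)^-1; nra.
  have cv := nonincreasing_cvg_mu (lebfin _ (Gpos 0%N)) (fun n => mOm _) mI niG.
  rewrite Icap lE ?lebfin // in cv.
  have [N [_ h1]] := ecvg_near _ _ _ _ e0 cv.
  exists N; move: h1; rewrite /= /L (lE _ (lebfin _ (Gpos N))) lte_fin /G.
  exact: ltW.
have Cont : forall t, 0 < t -> forall e, 0 < e -> exists2 δ, 0 < δ &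
    forall s, `|s - t| < δ -> `|L s - L t| <= e.
  move=> t t0 e e0.
  have [N1 h1] := Rc t t0 e e0.
  have [N2 h2] := Lc t t0 e e0.
  have i1 := inv_pos R N1. have i2 := inv_pos R N2. have i3 := inv_le1 R N2.
  set a1 := ((N1.+1)%:R : R)^-1 in i1 h1.
  set a2 := ((N2.+1)%:R : R)^-1 in i2 i3 h2.
  have a2pos : 0 < t / 2 * a2 by apply: mulr_gt0 => //; lra.
  exists (Num.min a1 (t / 2 * a2)); first by rewrite lt_min i1 a2pos.
  move=> s; rewrite lt_min !ltr_norml => /andP[/andP[hs1 hs2] /andP[hs3 hs4]].
  rewrite ler_norml.
  have [ts|st] := leP t s.
  - have Ls := Mono t s t0 ts.
    have q : s <= t + a1 by lra.
    have Ls2 := Mono s (t + a1) (lt_le_trans t0 ts) q.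
    apply/andP; split; lra.
  - have gpos : 0 < t - t / 2 * a2 by nra.
    have s0 : 0 < s by lra.
    have Ls := Mono s t s0 (ltW st).
    have q : t - t / 2 * a2 <= s by lra.
    have Ls2 := Mono (t - t / 2 * a2) s gpos q.
    apply/andP; split; lra.
have key : forall t, 0 < t -> forall e, 0 < e -> exists2 δ, 0 < δ &
    forall h, h != 0 -> `|h| < δ ->
    `|(- L t) - h^-1 * (EMstar P X leb (h + t) - EMstar P X leb t)| <= e.
  move=> t t0 e e0.
  have [δ1 δ10 Hc] := Cont t t0 e e0.
  exists (Num.min δ1 t); first by rewrite lt_min δ10 t0.
  move=> h hn; rewrite lt_min => /andP[hd1 hd2].
  have s0 : 0 < h + t by move: hd2; rewrite ltr_norml => /andP[? ?]; lra.
  have hc : `|L (h + t) - L t| <= e by apply: Hc; rewrite addrK.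
  have S1 := Sub (h + t) t s0 t0.
  have S2 := Sub t (h + t) t0 s0.
  set D := EMstar P X leb (h + t) - EMstar P X leb t.
  set Lt := L t in hc S1 S2 *. set Ls := L (h + t) in hc S1 S2 *.
  have D1 : 0 <= D + h * Lt by rewrite /D /Lt /Ls /L; lra.
  have D2 : D + h * Lt <= h * (Lt - Ls) by rewrite /D /Lt /Ls /L; lra.
  have -> : (- Lt) - h^-1 * D = - (h^-1 * (D + h * Lt)) by field.
  rewrite normrN normrM normfV ler_pdivrMl ?normr_gt0 //.
  rewrite ger0_norm //; apply: (le_trans D2); apply: (le_trans (ler_norm _)).
  rewrite normrM ler_pM2l ?normr_gt0 // distrC; exact: hc.
split.
- move=> t t0; exists (L t); split; first exact: lE (lebfin t t0).
  apply: DeriveDef.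
  - apply/cvg_ex; exists (- L t).
    apply/cvgrPdist_le => e e0; have [δ δ0 Hδ] := key t t0 e e0.
    exists δ => //= h /= hd hneq.
    match goal with |- context[?a + t] =>
      have -> : a = h by rewrite -[a]/(h * 1) mulr1 end.
    apply: Hδ => //.
    by move: hd; rewrite sub0r normrN.
  - apply: cvg_lim; first exact: norm_hausdorff.
    apply/cvgrPdist_le => e e0; have [δ δ0 Hδ] := key t t0 e e0.
    exists δ => //= h /= hd hneq.
    match goal with |- context[?a + t] =>
      have -> : a = h by rewrite -[a]/(h * 1) mulr1 end.
    apply: Hδ => //.
    by move: hd; rewrite sub0r normrN.
- move=> s t a s0 t0 /andP[a0 a1].
  have u0 : 0 < a * s + (1 - a) * t by nra.
  have h1 := Sub s _ s0 u0. have h2 := Sub t _ t0 u0.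
  set u := a * s + (1 - a) * t in u0 h1 h2 *.
  set Eu := EMstar P X leb u in h1 h2 *.
  set Es := EMstar P X leb s in h1 *. set Et := EMstar P X leb t in h2 *.
  have p1 : 0 <= a * (Es - (Eu - (s - u) * L u)) by apply: mulr_ge0; rewrite /L; lra.
  have p2 : 0 <= (1 - a) * (Et - (Eu - (t - u) * L u)) by apply: mulr_ge0; rewrite /L; lra.
  rewrite /u in p1 p2; lra.
Qed.
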